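(* For every integer $n\ge 1$ there is a context-free grammar of size $O(\log n)$ whose language is exactly \[ L_n=\{(a+b)^k\,a\,(a+b)^{n-1}\,a\,(a+b)^{n-1-k} \mid 0\le k\le n-1\}\subseteq\{a,b\}^{2n}. \]
   Context: A context-free grammar is $G=(\Sigma,N,R,S)$ with terminals $\Sigma$, non-terminals $N$, rules $A\to W$ ($A\in N$, $W\in(\Sigma\cup N)^*$) and start symbol $S$. Its size is $|G|=\sum_{(A\to W)\in R}|W|$. *)

(* Defs.v *)
From mathcomp Require Import all_boot.
From Stdlib Require List.
From Stdlib Require Import Relation_Operators.
Set Implicit Arguments. Unset Strict Implicit. Unset Printing Implicit Defensive.

Inductive sigma := a | b.

Definition symbol (N : Type) := (sigma + N)%type.

Record cfg := CFG {
  nonterm : Type;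
  rules : seq (nonterm * seq (symbol nonterm))%type;
  start : nonterm }.

Definition cfg_size (G : cfg) : nat := sumn (map (fun r => size r.2) (rules G)).

Definition step (G : cfg) (u v : seq (symbol (nonterm G))) : Prop :=
  exists (p s : seq (symbol (nonterm G))) (A : nonterm G) (W : seq (symbol (nonterm G))),
    List.In (A, W) (rules G) /\ u = p ++ inr A :: s /\ v = p ++ W ++ s.

Definition lang (G : cfg) (w : seq sigma) : Prop :=
  clos_refl_trans _ (@step G) [:: inr (start G)] (map inl w).

Definition Ln (n : nat) (w : seq sigma) : Prop :=
  exists k, k <= n - 1 /\
    exists u v x : seq sigma,
      size u = k /\ size v = n - 1 /\ size x = n - 1 - k /\
      w = u ++ a :: v ++ a :: x.

(* Main.v *)
Require Import Defs.
From mathcomp Require Import all_boot.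
From Stdlib Require List.
From Stdlib Require Import Relation_Operators.
From mathcomp Require Import zify.
Set Implicit Arguments. Unset Strict Implicit. Unset Printing Implicit Defensive.

Unset Implicit Arguments.
Inductive yields (G : cfg) : seq (symbol (nonterm G)) -> seq sigma -> Prop :=
| Ynil : yields G [::] [::]
| Yt c s w : yields G s w -> yields G (inl c :: s) (c :: w)
| Ynt A Wr s w1 w2 : List.In (A, Wr) (rules G) -> yields G Wr w1 -> yields G s w2 ->
    yields G (inr A :: s) (w1 ++ w2).
Set Implicit Arguments.
Arguments Ynil {G}. Arguments Yt {G c s w} _. Arguments Ynt {G A Wr s w1 w2} _ _ _.

Lemma yields_cat G s1 s2 w1 w2 : yields G s1 w1 -> yields G s2 w2 ->
  yields G (s1 ++ s2) (w1 ++ w2).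
Proof.
move=> H1 H2; elim: H1 => //= [c s w _ IH|A Wr s u1 u2 Hin HW _ _ IH].
  exact: Yt.
rewrite -catA; exact: Ynt Hin HW IH.
Qed.

Lemma yields_catV G s1 s2 w : yields G (s1 ++ s2) w ->
  exists w1 w2, w = w1 ++ w2 /\ yields G s1 w1 /\ yields G s2 w2.
Proof.
elim: s1 w => [|x s1 IH] w /=.
  by move=> H; exists [::], w; split; [|split; [exact: Ynil|]].
move=> H; inversion H as [|c s w' Hs e1 e2|A Wr s w1 w2 Hin HW Hs e1 e2]; subst.
- have [u1 [u2 [-> [K1 K2]]]] := IH _ Hs.
  by exists (c :: u1), u2; split; [|split; [exact: Yt|]].
- have [u1 [u2 [-> [K1 K2]]]] := IH _ Hs.
  exists (w1 ++ u1), u2; split; first by rewrite catA.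
  by split; [exact: Ynt Hin HW K1|].
Qed.

Lemma yields_map G w : yields G (map inl w) w.
Proof. elim: w => [|c w IH] /=; [exact: Ynil| exact: Yt]. Qed.

Lemma rt_back G u v w : clos_refl_trans _ (@step G) u v -> yields G v w -> yields G u w.
Proof.
move=> H; elim: H w => //; last by move=> x y z _ IH1 _ IH2 w /IH2 /IH1.
move=> x y [p [s [A [Wr [Hin [-> ->]]]]]] w.
move=> /yields_catV [wp [r [-> [Hp /yields_catV [wW [ws [-> [HW Hs]]]]]]]].
apply: yields_cat Hp _; exact: Ynt Hin HW Hs.
Qed.

Lemma rt_ctx G p q u v : clos_refl_trans _ (@step G) u v ->
  clos_refl_trans _ (@step G) (p ++ u ++ q) (p ++ v ++ q).
Proof.
elim=> [x y [p' [s [A [Wr [Hin [-> ->]]]]]]| x | x y z _ IH1 _ IH2].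
- apply: rt_step; exists (p ++ p'), (s ++ q), A, Wr; split=> //.
  by split; rewrite -!catA...
- exact: rt_refl.
- exact: rt_trans IH1 IH2.
Qed.

Lemma yields_rt G s w : yields G s w -> clos_refl_trans _ (@step G) s (map inl w).
Proof.
elim=> [|c s' w' _ IH|A Wr s' w1 w2 Hin _ IH1 _ IH2].
- exact: rt_refl.
- by have := rt_ctx [:: inl c] [::] IH; rewrite !cats0.
- apply: (@rt_trans _ _ _ (Wr ++ s')).
    apply: rt_step; by exists [::], s', A, Wr.
  apply: (@rt_trans _ _ _ (map inl w1 ++ s')).
    by have := rt_ctx [::] s' IH1.
  by have := rt_ctx (map inl w1) [::] IH2; rewrite !cats0 map_cat.
Qed.

Lemma lang_yields G w : lang G w <-> yields G [:: inr (start G)] w.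
Proof.
split; first by move=> H; apply: rt_back H (yields_map _ _).
move=> H; exact: yields_rt H.
Qed.

Lemma In_cat T (x : T) s1 s2 : List.In x (s1 ++ s2) <-> List.In x s1 \/ List.In x s2.
Proof. elim: s1 => [|y s1 IH] /=; [tauto|rewrite IH; tauto]. Qed.

Lemma In_map T U (f : T -> U) x s : List.In x s -> List.In (f x) (map f s).
Proof. elim: s => //= y s IH [->|/IH]; auto. Qed.

Lemma In_iota s k i : s <= i -> i < s + k -> List.In i (iota s k).
Proof.
elim: k s => [|k IH] s /= h1 h2; first lia.
case: (eqVneq i s) => [->|ne]; [by left|right; apply: IH; lia].
Qed.

Lemma In_flatten T U (f : T -> seq U) l x y : List.In x l -> List.In y (f x) ->
  List.In y (flatten (map f l)).
Proof.
elim: l => //= z l IH [->|/IH H] Hy; rewrite In_cat; [left|right; exact: H]; done.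
Qed.

Lemma In_flattenV T U (f : T -> seq U) l y : List.In y (flatten (map f l)) ->
  exists x, List.In y (f x).
Proof.
elim: l => //= z l IH; rewrite In_cat => -[H|/IH//]; by exists z.
Qed.

Inductive NT := P of nat | Q of nat | W of nat | Cn.

Definition rulesFor (m : nat) : seq (NT * seq (symbol NT)) :=
  let h := m %/ 2 in
  if m == 0 then
    [:: (P 0, [::]); (Q 0, [:: inl a]); (Q 0, [:: inl b]); (W 0, [:: inr Cn])]
  else if odd m then
    [:: (P m, [:: inr (P h); inr (Q h)]); (Q m, [:: inr (Q h); inr (Q h)]);
        (W m, [:: inr (W h); inr (Q h)]); (W m, [:: inr (Q h); inr (W h)])]
  else
    [:: (P m, [:: inr (P h); inr (P h)]); (Q m, [:: inr (P h); inr (Q h)]);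
        (W m, [:: inr (W h); inr (P h)]); (W m, [:: inr (P h); inr (W h)])].

Definition ms n := [seq n.-1 %/ 2 ^ i | i <- iota 0 (trunc_log 2 n).+2].

Definition rulesG n : seq (NT * seq (symbol NT)) :=
  (Cn, [:: inl a; inr (P n.-1); inl a]) :: flatten (map rulesFor (ms n)).

Definition Gn n := @CFG NT (rulesG n) (W n.-1).

Definition specC n y := exists v, size v = n.-1 /\ y = a :: v ++ [:: a].

Definition spec n (A : NT) (w : seq sigma) : Prop :=
  match A with
  | P m => size w = m
  | Q m => size w = m.+1
  | W m => exists k u x y, k <= m /\ size u = k /\ size x = m - k /\ specC n y /\
             w = u ++ y ++ x
  | Cn => specC n w
  end.

Unset Implicit Arguments.
Inductive ysem n : seq (symbol NT) -> seq sigma -> Prop :=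
| Snil : ysem n [::] [::]
| St c s w : ysem n s w -> ysem n (inl c :: s) (c :: w)
| Snt A s w1 w2 : spec n A w1 -> ysem n s w2 -> ysem n (inr A :: s) (w1 ++ w2).
Set Implicit Arguments.
Arguments Snil {n}. Arguments St {n c s w} _. Arguments Snt {n A s w1 w2} _ _.

Lemma ysem_nil n w : ysem n [::] w -> w = [::].
Proof. by move=> H; inversion H. Qed.
Lemma ysem_t n c s w : ysem n (inl c :: s) w -> exists w', w = c :: w' /\ ysem n s w'.
Proof. by move=> H; inversion H; subst; exists w0. Qed.
Lemma ysem_nt n A s w : ysem n (inr A :: s) w ->
  exists w1 w2, w = w1 ++ w2 /\ spec n A w1 /\ ysem n s w2.
Proof. by move=> H; inversion H; subst; exists w1, w2. Qed.

Lemma ysem2 n X Y w : ysem n [:: inr X; inr Y] w ->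
  exists w1 w2, w = w1 ++ w2 /\ spec n X w1 /\ spec n Y w2.
Proof.
move=> /ysem_nt [w1 [r [-> [H1 /ysem_nt [w2 [r' [-> [H2 /ysem_nil ->]]]]]]]].
by exists w1, w2; rewrite cats0.
Qed.

Lemma rulesFor_sound n m A Wr w : List.In (A, Wr) (rulesFor m) -> ysem n Wr w -> spec n A w.
Proof.
rewrite /rulesFor; have := divn_eq m 2; have := modn2 m.
case: (eqVneq m 0) => [->|m0] /=.
  move=> _ _ [|[|[|[|//]]]] [<- <-] /=.
  - by move/ysem_nil ->.
  - by move/ysem_t => [w' [-> /ysem_nil ->]].
  - by move/ysem_t => [w' [-> /ysem_nil ->]].
  - move/ysem_nt => [w1 [w2 [-> [H /ysem_nil ->]]]].
    by exists 0, [::], [::], w1; rewrite cats0.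
case: (odd m) => /= Hm Hd.
  move=> [|[|[|[|//]]]] [<- <-] /ysem2 [w1 [w2 [-> [H1 H2]]]] /=;
    rewrite ?size_cat ?H1 ?H2; try lia.
  - move: H1 => [k [u [x [y [hk [hu [hx [hy ->]]]]]]]].
    exists k, u, (x ++ w2), y; rewrite size_cat hx H2 -!catA; repeat split=> //; lia.
  - move: H2 => [k [u [x [y [hk [hu [hx [hy ->]]]]]]]].
    exists (size w1 + k), (w1 ++ u), x, y; rewrite size_cat hu H1 -!catA; repeat split=> //; lia.
move=> [|[|[|[|//]]]] [<- <-] /ysem2 [w1 [w2 [-> [H1 H2]]]] /=;
  rewrite ?size_cat ?H1 ?H2; try lia.
- move: H1 => [k [u [x [y [hk [hu [hx [hy ->]]]]]]]].
  exists k, u, (x ++ w2), y; rewrite size_cat hx H2 -!catA; repeat split=> //; lia.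
- move: H2 => [k [u [x [y [hk [hu [hx [hy ->]]]]]]]].
  exists (size w1 + k), (w1 ++ u), x, y; rewrite size_cat hu H1 -!catA; repeat split=> //; lia.
Qed.

Lemma rule_sound n A Wr w : List.In (A, Wr) (rulesG n) -> ysem n Wr w -> spec n A w.
Proof.
rewrite /rulesG; move=> [E|H]; last first.
  by have [m Hm] := In_flattenV H; exact: rulesFor_sound Hm.
case: E => <- <-.
move=> /ysem_t [w' [-> /ysem_nt [v [r [-> [Hv /ysem_t [r' [-> /ysem_nil ->]]]]]]]].
by exists v.
Qed.

Lemma sound n s w : yields (Gn n) s w -> ysem n s w.
Proof.
elim=> [|c s' w' _ IH|A Wr s' w1 w2 Hin _ IH1 _ IH2].
- exact: Snil.
- exact: St.
- apply: Snt IH2; exact: rule_sound Hin IH1.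
Qed.

Definition inms n m := exists i, i <= (trunc_log 2 n).+1 /\ m = n.-1 %/ 2 ^ i.

Lemma inms_In n m : inms n m -> List.In m (ms n).
Proof. move=> [i [hi ->]]; rewrite /ms; apply: (In_map (fun i => n.-1 %/ 2 ^ i)); apply: In_iota; lia. Qed.

Lemma inms_top n : inms n n.-1.
Proof. by exists 0; rewrite expn0 divn1. Qed.

Lemma inms_half n m : 0 < n -> inms n m -> m != 0 -> inms n (m %/ 2).
Proof.
move=> n0 [i [hi ->]] m0.
have hlt : n < 2 ^ (trunc_log 2 n).+1 by apply: trunc_log_ltn.
case: (ltnP i (trunc_log 2 n).+1) => hi'.
  by exists i.+1; split=> //; rewrite expnSr divnMA.
have ei : i = (trunc_log 2 n).+1 by apply/eqP; rewrite eqn_leq hi hi'.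
move: m0; rewrite ei divn_small //; lia.
Qed.

Definition gen (n : nat) (A : NT) (w : seq sigma) := yields (Gn n) [:: inr A] w.

Lemma gen_rule n A Wr w : List.In (A, Wr) (rulesG n) -> yields (Gn n) Wr w -> gen n A w.
Proof. move=> Hin H; rewrite /gen -(cats0 w); exact: (@Ynt (Gn n) A Wr [::] w [::] Hin H Ynil). Qed.

Lemma ycons n A s w1 w2 : gen n A w1 -> yields (Gn n) s w2 -> yields (Gn n) (inr A :: s) (w1 ++ w2).
Proof. move=> H1 H2; exact: (yields_cat H1 H2). Qed.

Lemma y2 n X Y w1 w2 : gen n X w1 -> gen n Y w2 -> yields (Gn n) [:: inr X; inr Y] (w1 ++ w2).
Proof. move=> H1 H2; apply: ycons H1 _; exact: H2. Qed.

Lemma In_rules n m r : inms n m -> List.In r (rulesFor m) -> List.In r (rulesG n).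
Proof. move=> /inms_In H Hr; right; exact: In_flatten H Hr. Qed.

Lemma splitw (w : seq sigma) k : w = take k w ++ drop k w.
Proof. by rewrite cat_take_drop. Qed.

Ltac inr := repeat (first [by left | right]).

Lemma comp_PQ n : 0 < n -> forall m, inms n m ->
  (forall w, size w = m -> gen n (P m) w) /\ (forall w, size w = m.+1 -> gen n (Q m) w).
Proof.
move=> n0; elim/ltn_ind => m IH Hm.
have Hr := In_rules Hm.
case: (eqVneq m 0) => [e|m0].
  move: Hr; rewrite e /rulesFor /= => Hr; split.
    move=> w /size0nil ->; apply: (gen_rule _ Ynil); apply: Hr; inr.
  case=> [|c [|//]] //= _; case: c.
    by apply: (gen_rule _ (Yt Ynil)); apply: Hr; inr.
  by apply: (gen_rule _ (Yt Ynil)); apply: Hr; inr.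
have hh : m %/ 2 < m by rewrite ltn_Pdiv //; lia.
have [IP IQ] := IH _ hh (inms_half n0 Hm m0).
have := divn_eq m 2; have := modn2 m; move: Hr; rewrite /rulesFor (negbTE m0).
have tk : forall (w : seq sigma) j, j <= size w -> size (take j w) = j.
  by move=> w j hj; rewrite size_takel.
case: (odd m) => /= Hr Hmod Hd; split=> w hw.
- rewrite (splitw w (m %/ 2)); apply: gen_rule; first by apply: Hr; inr.
  apply: y2; [apply: IP; rewrite tk ?hw| apply: IQ; rewrite size_drop hw]; lia.
- rewrite (splitw w (m %/ 2).+1); apply: gen_rule; first by apply: Hr; inr.
  apply: y2; [apply: IQ; rewrite tk ?hw| apply: IQ; rewrite size_drop hw]; lia.
- rewrite (splitw w (m %/ 2)); apply: gen_rule; first by apply: Hr; inr.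
  apply: y2; [apply: IP; rewrite tk ?hw| apply: IP; rewrite size_drop hw]; lia.
- rewrite (splitw w (m %/ 2)); apply: gen_rule; first by apply: Hr; inr.
  apply: y2; [apply: IP; rewrite tk ?hw| apply: IQ; rewrite size_drop hw]; lia.
Qed.

Lemma comp_C n y : 0 < n -> specC n y -> gen n Cn y.
Proof.
move=> n0 [v [hv ->]].
have [IP _] := comp_PQ n0 (inms_top n).
apply: gen_rule; first by left.
apply: Yt; apply: ycons (IP _ hv) _; exact: Yt Ynil.
Qed.

Lemma comp_W n : 0 < n -> forall m, inms n m ->
  forall k u x y, k <= m -> size u = k -> size x = m - k -> specC n y ->
  gen n (W m) (u ++ y ++ x).
Proof.
move=> n0; elim/ltn_ind => m IH Hm k u x y hk hu hx hy.
have Hr := In_rules Hm.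
case: (eqVneq m 0) => [e|m0].
  move: Hr; rewrite e /rulesFor /= => Hr.
  move: hk hu hx; rewrite e => hk hu hx.
  have k0 : k = 0 by lia.
  move: hu hx; rewrite k0 => /size0nil -> /size0nil ->; rewrite /= cats0.
  apply: gen_rule; first by apply: Hr; inr.
  rewrite -(cats0 y); apply: ycons Ynil; exact: comp_C.
have hh : m %/ 2 < m by rewrite ltn_Pdiv //; lia.
have Hh := inms_half n0 Hm m0.
have IW := IH _ hh Hh.
have [IP IQ] := comp_PQ n0 Hh.
have := divn_eq m 2; have := modn2 m; move: Hr; rewrite /rulesFor (negbTE m0).
case: (odd m) => /= Hr Hmod Hd.
- case: (leqP k (m %/ 2)) => hk2.
  + rewrite (splitw x (m %/ 2 - k)) !catA -(catA u).
    apply: gen_rule; first by apply: Hr; inr.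
    apply: y2; first apply: (IW k u (take (m %/ 2 - k) x) y) => //;
      try (rewrite size_takel ?hx); try lia.
    apply: IQ; rewrite size_drop hx; lia.
  + rewrite (splitw u (m %/ 2).+1) -catA.
    apply: (gen_rule (Wr := [:: inr (Q (m %/ 2)); inr (W (m %/ 2))])); first by apply: Hr; inr.
    apply: y2; first by apply: IQ; rewrite size_takel ?hu; lia.
    apply: (IW (k - (m %/ 2).+1) (drop (m %/ 2).+1 u) x y) => //;
      try (rewrite ?size_drop ?hu); lia.
- case: (leqP k (m %/ 2)) => hk2.
  + rewrite (splitw x (m %/ 2 - k)) !catA -(catA u).
    apply: gen_rule; first by apply: Hr; inr.
    apply: y2; first apply: (IW k u (take (m %/ 2 - k) x) y) => //;
      try (rewrite size_takel ?hx); try lia.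
    apply: IP; rewrite size_drop hx; lia.
  + rewrite (splitw u (m %/ 2)) -catA.
    apply: (gen_rule (Wr := [:: inr (P (m %/ 2)); inr (W (m %/ 2))])); first by apply: Hr; inr.
    apply: y2; first by apply: IP; rewrite size_takel ?hu; lia.
    apply: (IW (k - m %/ 2) (drop (m %/ 2) u) x y) => //;
      try (rewrite ?size_drop ?hu); lia.
Qed.

Lemma size_rulesFor l : sumn (map (fun r => size r.2) (flatten (map rulesFor l))) <= 8 * size l.
Proof.
elim: l => //= m l IH; rewrite map_cat sumn_cat.
have : sumn (map (fun r => size r.2) (rulesFor m)) <= 8.
  by rewrite /rulesFor; case: (m == 0) => //; case: (odd m).
lia.
Qed.

Theorem mainTheorem2 :
  exists C : nat, forall n : nat, 1 <= n ->
    exists G : cfg,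
      cfg_size G <= C * (trunc_log 2 n).+1 /\
      (forall w : seq sigma, lang G w <-> Ln n w).
Proof.
exists 20 => n n0; exists (Gn n); split.
  have H := size_rulesFor (ms n).
  have E : size (ms n) = (trunc_log 2 n).+2 by rewrite size_map size_iota.
  have -> : cfg_size (Gn n) =
    3 + sumn (map (fun r => size r.2) (flatten (map rulesFor (ms n)))) by [].
  lia.
move=> w; rewrite lang_yields /=; split.
  move=> /sound /ysem_nt [w1 [w2 [-> [H /ysem_nil ->]]]].
  move: H => [k [u [x [y [hk [hu [hx [[v [hv ->]] ->]]]]]]]].
  exists k; rewrite subn1; split=> //; exists u, v, x.
  by rewrite cats0 /= -catA.
move=> [k [hk [u [v [x [hu [hv [hx ->]]]]]]]].
have -> : u ++ a :: v ++ a :: x = u ++ (a :: v ++ [:: a]) ++ x by rewrite /= -catA.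
apply: (comp_W n0 (inms_top n) (k:=k)); rewrite -?subn1 //.
by exists v; rewrite -subn1.
Qed.
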